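(* Let $d\geq1$, $n\geq1$, $u>d$ and $\vec v=(v_0,\dots,v_{d-1})$ with $u>v_0>\dots>v_{d-1}>0$. A $(\vec v,u)$-dimensional representation of $\mathcal{F}_{d,n}$ is $\vartheta^+$-semistable if and only if it is $\vartheta^+$-stable. Moreover, it is $\vartheta^+$-semistable if and only if the maps $e,A_1,\dots,A_{d-1}$ are all injective.
   Context: Set $V_i=\mathbb{C}^{v_i}$ ($i=0,\dots,d-1$), $U=\mathbb{C}^u$. A $(\vec v,u)$-dimensional representation of $\mathcal{F}_{d,n}$ is a tuple of linear maps $e\colon V_0\to U$, $A_p\colon V_p\to V_{p-1}$ ($p=1,\dots,d-1$), and, when $n\geq2$, $f_q\colon U\to V_0$ and $B_{pq}\colon V_{p-1}\to V_p$ ($p=1,\dots,d-1$, $q=1,\dots,n-1$), satisfying for $n\geq2$ and every $q$: if $d=1$, $f_qe=0$; if $d\geq2$, $A_1B_{1q}+f_qe=0$ on $V_0$, $A_{p+1}B_{p+1,q}=B_{pq}A_p$ on $V_p$ for $1\leq p\leq d-2$, and $B_{d-1,q}A_{d-1}=0$ on $V_{d-1}$. (For $n=1$ there are no $f_q,B_{pq}$ and no relations.) Stability: fix a basis $\varepsilon_1,\dots,\varepsilon_u$ of $U$, coordinate maps $\varphi_l\colon U\to\mathbb{C}$ and $\psi_l\colon\mathbb{C}\to U$, $\psi_l(1)=\varepsilon_l$. Associate the representation on $V\oplus\mathbb{C}$ (extra vertex $\infty$ with $V_\infty=\mathbb{C}$) with maps $\tilde e_l=\varphi_l\circ e\colon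 V_0\to\mathbb{C}$, $\tilde f_{ql}=f_q\circ\psi_l\colon\mathbb{C}\to V_0$, and the $A_p,B_{pq}$. A subrepresentation is a collection of subspaces $S_i\subset V_i$, $S_\infty\subset\mathbb{C}$ preserved by all these maps; put $s_i=\dim S_i$. With $\vartheta^+=(1,\dots,1)\in\mathbb{R}^d$, the representation is $\vartheta^+$-semistable (resp. stable) if every proper nontrivial subrepresentation satisfies $\sum_i s_i\leq(\sum_i v_i)s_\infty$ (resp. strict inequality). *)

(* Defs.v *)
(* Linear maps are matrices acting on ROW vectors:
   a map X -> Y with dim X = a, dim Y = b is a matrix M : 'M_(a,b),
   x |-> x *m M.  Composition "g f" (first f, then g) is  F *m G.
   Subspaces are row spaces of square matrices (mxalgebra, %MS). *)
From HB Require Import structures.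
From mathcomp Require Import all_boot all_algebra.
From mathcomp Require Import complex reals.
Set Implicit Arguments. Unset Strict Implicit. Unset Printing Implicit Defensive.
Import GRing.Theory.
Local Open Scope ring_scope.

Section Quiver.
Variable K : fieldType.
Variables (d n u : nat) (v : nat -> nat).
(* V_i = K^(v i), i = 0..d-1 ;  U = K^u *)

(* A tuple of linear maps; only indices 1 <= p <= d-1, 1 <= q <= n-1 matter. *)
Record rep := Rep {
  rep_e : 'M[K]_(v 0, u);
  rep_A : forall p : nat, 'M[K]_(v p, v p.-1);
  rep_f : nat -> 'M[K]_(u, v 0);
  rep_B : forall p q : nat, 'M[K]_(v p.-1, v p)
}.

Definition rep_relations (r : rep) : Prop :=
  (2 <= n)%N ->
  forall q : nat, (1 <= q <= n.-1)%N ->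
    if d == 1%N then rep_e r *m rep_f r q = 0
    else
      [/\ rep_B r 1 q *m rep_A r 1 + rep_e r *m rep_f r q = 0,
          (forall p : nat, (1 <= p <= d - 2)%N ->
             rep_B r p.+1 q *m rep_A r p.+1 = rep_A r p *m rep_B r p q)
        & rep_A r d.-1 *m rep_B r d.-1 q = 0].

(* coordinate maps: e~_l = phi_l o e : V_0 -> C ; f~_ql = f_q o psi_l : C -> V_0 *)
Definition etil (r : rep) (l : 'I_u) : 'M[K]_(v 0, 1) := rep_e r *m delta_mx l 0.
Definition ftil (r : rep) (q : nat) (l : 'I_u) : 'M[K]_(1, v 0) :=
  delta_mx 0 l *m rep_f r q.

(* A subrepresentation of the framed representation on V (+) C:
   subspaces S i of V_i (row space of S i) and Sinf of C, preserved by all maps. *)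
Definition is_subrep (r : rep) (S : forall i : nat, 'M[K]_(v i)) (Sinf : 'M[K]_1) : Prop :=
  [/\ forall l : 'I_u, (S 0%N *m etil r l <= Sinf)%MS,
      forall q : nat, (1 <= q <= n.-1)%N -> forall l : 'I_u, (Sinf *m ftil r q l <= S 0%N)%MS,
      forall p : nat, (1 <= p <= d.-1)%N -> (S p *m rep_A r p <= S p.-1)%MS
    & forall p q : nat, (1 <= p <= d.-1)%N -> (1 <= q <= n.-1)%N ->
        (S p.-1 *m rep_B r p q <= S p)%MS].

Definition subrep_trivial (S : forall i : nat, 'M[K]_(v i)) (Sinf : 'M[K]_1) : Prop :=
  (forall i : nat, (i < d)%N -> \rank (S i) = 0%N) /\ \rank Sinf = 0%N.

Definition subrep_full (S : forall i : nat, 'M[K]_(v i)) (Sinf : 'M[K]_1) : Prop :=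
  (forall i : nat, (i < d)%N -> \rank (S i) = v i) /\ \rank Sinf = 1%N.

(* theta^+ = (1,...,1) *)
Definition theta_semistable (r : rep) : Prop :=
  forall (S : forall i : nat, 'M[K]_(v i)) (Sinf : 'M[K]_1),
    is_subrep r S Sinf -> ~ subrep_trivial S Sinf -> ~ subrep_full S Sinf ->
    (\sum_(i < d) \rank (S i) <= (\sum_(i < d) v i) * \rank Sinf)%N.

Definition theta_stable (r : rep) : Prop :=
  forall (S : forall i : nat, 'M[K]_(v i)) (Sinf : 'M[K]_1),
    is_subrep r S Sinf -> ~ subrep_trivial S Sinf -> ~ subrep_full S Sinf ->
    (\sum_(i < d) \rank (S i) < (\sum_(i < d) v i) * \rank Sinf)%N.

End Quiver.

(* Main.v *)
Require Import Defs.
From HB Require Import structures.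
From mathcomp Require Import all_boot all_algebra.
From mathcomp Require Import complex reals.
From mathcomp Require Import zify.
Import GRing.Theory.
Local Open Scope ring_scope.

Section Aux.
Variable K : fieldType.
Variables (d n u : nat) (v : nat -> nat) (r : rep K u v).

Fixpoint comp (p : nat) : 'M[K]_(v p, u) :=
  match p with 0 => rep_e r | p'.+1 => rep_A r p'.+1 *m comp p' end.

Definition NoBad : Prop := forall S Sinf, is_subrep d n r S Sinf ->
  \rank Sinf = 0%N -> forall i, (i < d)%N -> \rank (S i) = 0%N.

Lemma free_mul m k p (A : 'M[K]_(m, k)) (B : 'M[K]_(k, p)) :
  row_free (A *m B) -> row_free A.
Proof.
rewrite -!row_leq_rank => h; apply: leq_trans h _; exact: mxrankM_maxl.
Qed.

Lemma Bkey (hrel : rep_relations d n r) q (hq : (1 <= q <= n.-1)%N) :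
  forall k, (k.+1 <= d.-1)%N -> forall m (X : 'M[K]_(m, v k)),
  X *m comp k = 0 -> X *m rep_B r k.+1 q *m comp k.+1 = 0.
Proof.
have hn2 : (2 <= n)%N by lia.
have hq' := hrel hn2 q hq.
elim=> [|k IH] hk m X hX.
  have hd1 : (d == 1%N) = false by apply/eqP; lia.
  rewrite hd1 in hq'; case: hq' => h1 _ _.
  rewrite mulmxA -(mulmxA X) -[rep_B r 1 q *m rep_A r 1]addr0 -(subrr (rep_e r *m rep_f r q)).
  rewrite addrA h1 add0r mulmxN mulNmx !mulmxA hX !mul0mx oppr0 //.
have hd1 : (d == 1%N) = false by apply/eqP; lia.
rewrite hd1 in hq'; case: hq' => _ h2 _.
have h2' := h2 k.+1 ltac:(lia).
have E : X *m rep_B r k.+2 q *m comp k.+2 =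
  (X *m rep_A r k.+1) *m rep_B r k.+1 q *m comp k.+1.
  rewrite [comp k.+2]/= -(mulmxA X) (mulmxA _ (rep_A r k.+2)) h2'.
  by rewrite !mulmxA.
rewrite E; apply: IH; first by lia.
by rewrite -mulmxA.
Qed.

Lemma kernel_subrep (hrel : rep_relations d n r) :
  is_subrep d n r (fun p => kermx (comp p)) 0.
Proof.
split.
- move=> l; rewrite /etil mulmxA /= mulmx_ker mul0mx; exact: sub0mx.
- move=> q _ l; rewrite mul0mx; exact: sub0mx.
- case=> [|p] hp //=; apply/sub_kermxP; by rewrite -mulmxA mulmx_ker.
- case=> [|p] q hp hq //; apply/sub_kermxP.
  have hp2 : (p.+1 <= d.-1)%N by lia.
  have := Bkey hrel q hq p hp2 _ (kermx (comp p)) (mulmx_ker _).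
  exact.
Qed.

Lemma nobad_iff (hd : (0 < d)%N) (hrel : rep_relations d n r) :
  NoBad <-> row_free (rep_e r) /\
     (forall p : nat, (1 <= p <= d.-1)%N -> row_free (rep_A r p)).
Proof.
split.
- move=> NB.
  have H p : (p < d)%N -> row_free (comp p).
    move=> hp; have := NB _ _ (kernel_subrep hrel) (mxrank0 _ _ _) p hp.
    by move/eqP; rewrite mxrank_eq0 kermx_eq0.
  split; first by have := H 0%N; apply; lia.
  case=> [|p] hp //; have := H p.+1; rewrite /=.
  move=> h; apply: free_mul (h _); lia.
- case=> he hA S Sinf [h1 h2 h3 h4] hinf.
  move/eqP: hinf; rewrite mxrank_eq0 => /eqP hinf.
  have S00 : S 0%N = 0.
    apply: (row_free_inj he); rewrite mul0mx.
    apply/matrixP => i j.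
    have := h1 j; rewrite hinf submx0 /etil mulmxA -colE => /eqP hc.
    have := congr1 (fun M : 'M[K]_(v 0, 1) => M i 0) hc.
    by rewrite /= [in X in X = _ -> _]mxE => ->; rewrite !mxE.
  suff H : forall p, (p < d)%N -> S p = 0.
    by move=> i hi; rewrite H // mxrank0.
  elim=> [|p IH] hp //.
  apply: (row_free_inj (hA p.+1 _)); first lia.
  rewrite mul0mx; apply/eqP; rewrite -submx0.
  have := h3 p.+1; rewrite /= IH //; last lia.
  apply; lia.
Qed.

End Aux.

Theorem lemma7p2 (R : realType) (d n u : nat) (v : nat -> nat)
  (hd : (1 <= d)%N) (hn : (1 <= n)%N) (hud : (d < u)%N)
  (hu0 : (v 0%N < u)%N)
  (hdec : forall i : nat, (i.+1 < d)%N -> (v i.+1 < v i)%N)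
  (hlast : (0 < v d.-1)%N)
  (r : rep R[i] u v) (hrel : rep_relations d n r) :
  (theta_semistable d n r <-> theta_stable d n r) /\
  (theta_semistable d n r <->
     row_free (rep_e r) /\ (forall p : nat, (1 <= p <= d.-1)%N -> row_free (rep_A r p))).
Proof.
have ss_nb : theta_semistable d n r -> @NoBad _ d n _ _ r.
  move=> SS S Sinf hs hinf i hi.
  apply/eqP/negPn/negP => hne.
  have := SS S Sinf hs.
  have nt : ~ subrep_trivial d S Sinf.
    by case=> /(_ i hi) h _; rewrite h in hne.
  have nf : ~ subrep_full d S Sinf by case=> _; rewrite hinf.
  move=> /(_ nt nf); rewrite hinf muln0 leqn0 => /eqP.
  rewrite (bigD1 (Ordinal hi)) //= => /eqP; rewrite addn_eq0 => /andP [/eqP h _].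
  by rewrite h in hne.
have nb_st : @NoBad _ d n _ _ r -> theta_stable d n r.
  move=> NB S Sinf hs nt nf.
  have hle : (\rank Sinf <= 1)%N by exact: rank_leq_row.
  case hr: (\rank Sinf) => [|k].
    by exfalso; apply: nt; split => // i hi; apply: (NB S Sinf).
  have hk : k = 0%N by lia.
  subst k; rewrite muln1.
  apply/negPn/negP => hlt.
  apply: nf; split => // i hi.
  apply/eqP/negPn/negP => hne; apply: (negP hlt).
  have hri : (\rank (S i) < v i)%N by rewrite ltn_neqAle hne rank_leq_row.
  rewrite (bigD1 (Ordinal hi)) //= [X in (_ < X)%N](bigD1 (Ordinal hi)) //=.
  have : (\sum_(j < d | j != Ordinal hi) \rank (S j) <= \sum_(j < d | j != Ordinal hi) v j)%N.
    by apply: leq_sum => j _; exact: rank_leq_row.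
  move=> HH; rewrite -addSn; exact: leq_add.
have st_ss : theta_stable d n r -> theta_semistable d n r.
  by move=> ST S Sinf a b c; apply: ltnW; apply: ST.
split; first by split; auto.
rewrite -(@nobad_iff _ d n _ _ r hd hrel); split; auto.
Qed.
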